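(* Let $p$ be a prime, $n>2$ an integer with $n=st$ where $s,t$ are positive integers with $\gcd(s,t)=1$, and fix $c\in\mathbb{F}_{p^n}$ with $c\neq 1$. Let $f:\mathbb{F}_{p^t}\to\mathbb{F}_{p^t}$, $g:\mathbb{F}_{p^s}\to\mathbb{F}_{p^s}$ and $h:\mathbb{F}_{p^n}\to\mathbb{F}_{p^n}$ be functions, and define $F:\mathbb{F}_{p^n}\to\mathbb{F}_{p^n}$ by $F(x)=f(x)$ if $x\in\mathbb{F}_{p^t}$, $F(x)=g(x)$ if $x\in\mathbb{F}_{p^s}\setminus\mathbb{F}_{p^t}$, and $F(x)=h(x)$ if $x\notin\mathbb{F}_{p^s}\cup\mathbb{F}_{p^t}$. Let $\{g_1=1,g_2,\ldots,g_s\}$ be a basis of $\mathbb{F}_{p^n}$ over $\mathbb{F}_{p^t}$ and $\{g_1'=1,g_2',\ldots,g_t'\}$ a basis of $\mathbb{F}_{p^n}$ over $\mathbb{F}_{p^s}$, and write $c=\sum_{i=1}^s c_ig_i=\sum_{i=1}^t c_i'g_i'$ with $c_i\in\mathbb{F}_{p^t}$, $c_i'\in\mathbb{F}_{p^s}$. Then $\delta_{F,c}\leq \delta_{f,0}+\delta_{g,0}+\delta_{h,0}$ if $c=0$, and if $c\neq 0$, \[ \delta_{F,c}\leq\max\Big\{\delta_{f,c_1}+\delta_{g,c_1'}+\delta_{h,c},\ \delta_{f,c_1}+2p^s\delta_{h,0}+\delta_{h,c},\ 1+p^t\delta_{h,0}+\min\{p^t\delta_{g,0},p^s\delta_{f,0}\}+\delta_{g,c_1'}+\delta_{h,c},\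 (2p^t+2p^s)\delta_{h,0}+\delta_{h,c}\Big\}. \]
   Context: For a finite field $\mathbb{F}_{p^r}$, a function $u:\mathbb{F}_{p^r}\to\mathbb{F}_{p^r}$ and $c'\in\mathbb{F}_{p^r}$, let ${}_{c'}\Delta_u(a,b)=\#\{x\in\mathbb{F}_{p^r}: u(x+a)-c'u(x)=b\}$ and define the $c'$-differential uniformity $\delta_{u,c'}=\max\{{}_{c'}\Delta_u(a,b): a,b\in\mathbb{F}_{p^r},\ a\neq 0\text{ if } c'=1\}$. In particular $\delta_{u,0}=\max_b \#u^{-1}(b)$. *)

(* Defs.v *)
From HB Require Import structures.
From mathcomp Require Import all_boot all_order all_algebra.
Set Implicit Arguments. Unset Strict Implicit. Unset Printing Implicit Defensive.
Import GRing.Theory.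
Local Open Scope ring_scope.

(* The subfield F_{p^k} of a finite field L of characteristic p:
   the set of roots of X^(p^k) - X in L. *)
Definition subF (L : finFieldType) (p k : nat) : {set L} :=
  [set x : L | x ^+ (p ^ k) == x].

(* c'-differential uniformity of u restricted to the domain D (a subfield),
   i.e. of u : D -> D:
   max over a, b in D (a <> 0 if c' = 1) of #{x in D | u(x+a) - c' u(x) = b}. *)
Definition cdu (L : finFieldType) (D : {set L}) (u : L -> L) (c' : L) : nat :=
  (\max_(a in D | (c' != 1%R) || (a != 0%R))
     \max_(b in D) #|[set x in D | (u (x + a) - c' * u x)%R == b]|)%N.

Definition pieceF (L : finFieldType) (Kt Ks : {set L}) (f g h : L -> L) (x : L) : L :=
  if x \in Kt then f x else if x \in Ks then g x else h x.

(* Main.v *)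
Require Import Defs.
From HB Require Import structures.
From mathcomp Require Import all_boot all_order all_algebra.
Import GRing.Theory.
From mathcomp Require Import zify.
Local Open Scope ring_scope.

Lemma card_subF (L : finFieldType) p k : prime p -> (0 < k)%N -> (#|subF L p k| <= p ^ k)%N.
Proof.
move=> pp k0.
have m2 : (1 < p ^ k)%N.
  apply: (leq_trans (prime_gt1 pp)); rewrite -{1}(expn1 p) leq_pexp2l //; exact: prime_gt0.
set m := (p ^ k)%N in m2 *.
have sz : size ('X^m - 'X : {poly L}) = m.+1.
  by rewrite size_polyDl ?size_polyXn // size_polyN size_polyX.
have nz : ('X^m - 'X : {poly L}) != 0 by rewrite -size_poly_eq0 sz.
have := max_poly_roots nz _ (enum_uniq (mem (subF L p k))).
rewrite sz -cardE ltnS; apply.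
apply/allP => x; rewrite mem_enum inE => /eqP hx.
by rewrite rootE !hornerE hx subrr.
Qed.

Lemma cdu_ge (L : finFieldType) (D : {set L}) (u : L -> L) (c' a b : L) :
  a \in D -> b \in D -> (c' != 1) || (a != 0) ->
  (#|[set x in D | (u (x + a) - c' * u x == b)%R]| <= cdu D u c')%N.
Proof.
move=> aD bD hc; rewrite /cdu.
have h1 := leq_bigmax_cond (F := fun b => #|[set x in D | (u (x + a) - c' * u x == b)%R]|) b bD.
apply: (leq_trans h1).
apply: (leq_bigmax_cond (P := fun a => (a \in D) && ((c' != 1) || (a != 0)))
   (F := fun a => \max_(b in D) #|[set x in D | (u (x + a) - c' * u x == b)%R]|) a).
by rewrite aD hc.
Qed.

Lemma cdu0_ge (L : finFieldType) (D : {set L}) (u : L -> L) (b : L) :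
  (0 : L) \in D -> b \in D ->
  (#|[set x in D | u x == b]| <= cdu D u 0%R)%N.
Proof.
move=> zD bD; apply: (leq_trans _ (@cdu_ge L D u 0 0 b zD bD _)); last by rewrite eq_sym oner_eq0.
apply: subset_leq_card; apply/subsetP => x; rewrite !inE addr0 mul0r subr0 //.
Qed.

Lemma zero_subF (L : finFieldType) p k : prime p -> (0 : L) \in subF L p k.
Proof. by move=> pp; rewrite inE expr0n expn_eq0 (_ : (p == 0%N) = false) //; apply/negbTE; rewrite -lt0n prime_gt0. Qed.

Theorem theorem2p6 (p n s t : nat) (L : finFieldType)
  (hp : prime p) (hL : #|L| = (p ^ n)%N) (hn : (2 < n)%N)
  (hs : (0 < s)%N) (ht : (0 < t)%N) (hst : n = (s * t)%N) (hcop : coprime s t)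
  (c : L) (hc1 : c != 1)
  (f g h : L -> L)
  (hf : forall x, x \in subF L p t -> f x \in subF L p t)
  (hg : forall x, x \in subF L p s -> g x \in subF L p s)
  (gb gb' : nat -> L) (hgb0 : gb 0%N = 1) (hgb0' : gb' 0%N = 1)
  (hgb_free : forall lam : nat -> L, (forall i, (i < s)%N -> lam i \in subF L p t) ->
      \sum_(i < s) lam i * gb i = 0 -> forall i, (i < s)%N -> lam i = 0)
  (hgb_span : forall y : L, exists2 lam : nat -> L,
      (forall i, (i < s)%N -> lam i \in subF L p t) & y = \sum_(i < s) lam i * gb i)
  (hgb'_free : forall lam : nat -> L, (forall i, (i < t)%N -> lam i \in subF L p s) ->
      \sum_(i < t) lam i * gb' i = 0 -> forall i, (i < t)%N -> lam i = 0)
  (hgb'_span : forall y : L, exists2 lam : nat -> L,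
      (forall i, (i < t)%N -> lam i \in subF L p s) & y = \sum_(i < t) lam i * gb' i)
  (cc cc' : nat -> L)
  (hcc : forall i, (i < s)%N -> cc i \in subF L p t)
  (hcc' : forall i, (i < t)%N -> cc' i \in subF L p s)
  (hcdec : c = \sum_(i < s) cc i * gb i)
  (hcdec' : c = \sum_(i < t) cc' i * gb' i) :
  let Kt := subF L p t in
  let Ks := subF L p s in
  let KL := [set: L] in
  let F := pieceF Kt Ks f g h in
  (c = 0 ->
     (cdu KL F 0%R <= cdu Kt f 0%R + cdu Ks g 0%R + cdu KL h 0%R)%N) /\
  (c != 0 ->
     (cdu KL F c <=
       maxn (maxn
         (cdu Kt f (cc 0%N) + cdu Ks g (cc' 0%N) + cdu KL h c)
         (cdu Kt f (cc 0%N) + 2 * p ^ s * cdu KL h 0%R + cdu KL h c))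
       (maxn
         (1 + p ^ t * cdu KL h 0%R
            + minn (p ^ t * cdu Ks g 0%R) (p ^ s * cdu Kt f 0%R)
            + cdu Ks g (cc' 0%N) + cdu KL h c)
         ((2 * p ^ t + 2 * p ^ s) * cdu KL h 0%R + cdu KL h c)))%N).
Proof.
move=> Kt Ks KL F.
have cKt := card_subF L p t hp ht.
have cKs := card_subF L p s hp hs.
have zKt : (0 : L) \in Kt by exact: zero_subF.
have zKs : (0 : L) \in Ks by exact: zero_subF.
split.
- move=> c0; rewrite {1}/cdu; apply/bigmax_leqP => a _; apply/bigmax_leqP => b _.
  set S := [set x | F x == b].
  have -> : [set x in KL | (F (x + a) - 0 * F x == b)%R] = (fun x => x + a) @^-1: S.
    by apply/setP => x; rewrite !inE mul0r subr0.
  rewrite card_preimset; last exact: addIr.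
  have sub : S \subset ([set x in Kt | f x == b] :|: [set x in Ks | g x == b]) :|: [set x in KL | h x == b].
    apply/subsetP => x; rewrite [x \in S]inE /F /pieceF.
    case: ifP => xt; first by move=> fx; rewrite !inE in xt *; rewrite xt fx.
    case: ifP => xs fx; rewrite !inE in xt xs *; by rewrite ?xs fx ?orbT.
  apply: (leq_trans (subset_leq_card sub)).
  apply: (leq_trans (leq_card_setU _ _)); apply: leq_add; last exact: cdu0_ge.
  apply: (leq_trans (leq_card_setU _ _)); apply: leq_add.
    case: (boolP (b \in Kt)) => hb; first exact: cdu0_ge.
    suff -> : [set x in Kt | f x == b] = set0 by rewrite cards0.
    apply/setP => x; rewrite !inE; apply/andP => -[xK /eqP fx].
    have xK' : x \in Kt by rewrite inE.
    by move: hb; rewrite -fx hf.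
  case: (boolP (b \in Ks)) => hb; first exact: cdu0_ge.
  suff -> : [set x in Ks | g x == b] = set0 by rewrite cards0.
  apply/setP => x; rewrite !inE; apply/andP => -[xK /eqP fx].
  have xK' : x \in Ks by rewrite inE.
  by move: hb; rewrite -fx hg.
- move=> cn0.
  have {cKt}cKt : (#|Kt| <= p ^ t)%N := cKt.
  have {cKs}cKs : (#|Ks| <= p ^ s)%N := cKs.
  clearbody Kt Ks.
  rewrite {1}/cdu; apply/bigmax_leqP => a _; apply/bigmax_leqP => b _.
  set T := Kt :|: Ks.
  have sub : [set x in KL | (F (x + a) - c * F x == b)%R] \subset
      (T :|: (fun x => x + a) @^-1: T) :|: [set x in KL | (h (x + a) - c * h x == b)%R].
    apply/subsetP => x; rewrite !inE /F /pieceF.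
    case: (boolP (x \in Kt)) => xt; first by rewrite ?orbT.
    case: (boolP (x \in Ks)) => xs; first by rewrite ?orbT.
    case: (boolP (x + a \in Kt)) => xat; first by rewrite ?orbT.
    case: (boolP (x + a \in Ks)) => xas; first by rewrite ?orbT.
    by move=> /= ->.
  have hT : (#|T| <= p ^ t + p ^ s)%N.
    exact: (leq_trans (leq_card_setU _ _) (leq_add cKt cKs)).
  have h1 : (1 <= cdu KL h 0%R)%N.
    apply: (leq_trans _ (@cdu0_ge L KL h (h 0) (in_setT _) (in_setT _))).
    by rewrite card_gt0; apply/set0Pn; exists (0 : L); rewrite !inE eqxx.
  have hc : (#|[set x in KL | (h (x + a) - c * h x == b)%R]| <= cdu KL h c)%N.
    by apply: cdu_ge; rewrite ?in_setT ?hc1.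
  have H := subset_leq_card sub; apply: (leq_trans H).
  apply: (leq_trans (leq_card_setU _ _)).
  apply: (leq_trans _ (leq_maxr _ _)); apply: (leq_trans _ (leq_maxr _ _)).
  apply: leq_add hc.
  apply: (leq_trans (leq_card_setU _ _)).
  rewrite card_preimset; last exact: addIr.
  apply: (@leq_trans ((2 * p ^ t + 2 * p ^ s) * 1)%N); last by rewrite leq_mul2l h1 orbT.
  lia.
Qed.
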